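(* Let $(\mathcal A,\varphi,\mathcal F,\Phi)$ be a ncps of type B$'$ with associated infinitesimal ncps $(\mathcal B,\varphi,\varphi')$, let $q\in\mathcal F$ with $q^2=q$, $\Phi(q)=1$ and $(\mathcal A,\{q\})$ cyclic-antimonotone independent, and let $p:=1_{\mathcal B}-q$. Then for every $n\in\mathbb N$ and every $\sigma\in\mathrm{NC}(n)$, $$\sum_{\pi\in\mathrm{NC}(n),\ \pi\le\sigma}\kappa'_\pi[p,p,\dots,p]=-|\sigma|.$$
   Context: Ncps of type B$'$ $(\mathcal A,\varphi,\mathcal F,\Phi)$: $\mathcal A$ unital complex algebra, $\varphi(1_{\mathcal A})=1$, $\mathcal F$ an algebra which is an $\mathcal A$-bimodule compatible with its multiplication, $\Phi:\mathcal F\to\mathbb C$ linear. $\mathcal B=\mathcal A\oplus\mathcal F$ with product $(a_1,f_1)(a_2,f_2)=(a_1a_2,a_1f_2+f_1a_2+f_1f_2)$, unit $1_{\mathcal A}$; $\varphi(a+f):=\varphi(a)$, $\varphi'(a+f):=\Phi(f)$. Cyclic-antimonotone independence of $(\mathcal A,\{q\})$: $\Phi(a_0qa_1\cdots a_{n-1}qa_n)=\varphi(a_0a_n)\prod_{i=1}^{n-1}\varphi(a_i)\Phi(q^n)$ for $a_l\in\mathcal A$. $\mathrm{NC}(n)$: noncrossing partitions of $\{1,\dots,n\}$ with the refinement order, $|\sigma|$ the number of blocks. Infinitesimal free cumulants: let $\mathbb G=\mathbb C[\epsilon]/(\epsilon^2)$, $\tilde\varphi=\varphi+\epsilon\varphi':\mathcal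 B\to\mathbb G$, $\tilde\varphi_\pi[b_1,\dots,b_n]=\prod_{V\in\pi}\tilde\varphi(\prod_{i\in V}^{\to}b_i)$ (ordered products over blocks), $\tilde\kappa_\pi=\sum_{\sigma\le\pi}\tilde\varphi_\sigma\,\mu_n(\sigma,\pi)$ with $\mu_n$ the Möbius function of $\mathrm{NC}(n)$; writing $\tilde\kappa_\pi=\kappa_\pi+\epsilon\kappa'_\pi$, $\kappa'_\pi$ is the infinitesimal free cumulant. *)

(* Defs.v *)
From HB Require Import structures.
From mathcomp Require Import all_boot all_order all_algebra complex.
From mathcomp Require Import reals.
Set Implicit Arguments. Unset Strict Implicit. Unset Printing Implicit Defensive.
Import Order.TTheory GRing.Theory Num.Theory.
Local Open Scope ring_scope.

Section TypeBprime.
Variables (R : realType).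
Local Notation C := (R[i]).
Variables (A : algType C) (F : lmodType C)
          (mulF : F -> F -> F) (lact : A -> F -> F) (ract : F -> A -> F)
          (phi : A -> C) (Phi : F -> C).

Definition is_ncps_typeBprime : Prop :=
  (
      (forall a b, phi (a + b) = phi a + phi b) /\
      (forall (c : C) a, phi (c *: a) = c * phi a) /\
      phi 1 = 1) /\
  (
      (forall f g, Phi (f + g) = Phi f + Phi g) /\
      (forall (c : C) f, Phi (c *: f) = c * Phi f)) /\
  (
      (forall f g h, mulF (mulF f g) h = mulF f (mulF g h)) /\
      (forall f g h, mulF (f + g) h = mulF f h + mulF g h) /\
      (forall f g h, mulF f (g + h) = mulF f g + mulF f h) /\
      (forall (c : C) f g, mulF (c *: f) g = c *: mulF f g) /\
      (forall (c : C) f g, mulF f (c *: g) = c *: mulF f g)) /\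
  (
      (forall a b f, lact (a + b) f = lact a f + lact b f) /\
      (forall a f g, lact a (f + g) = lact a f + lact a g) /\
      (forall (c : C) a f, lact (c *: a) f = c *: lact a f) /\
      (forall (c : C) a f, lact a (c *: f) = c *: lact a f) /\
      (forall a b f, lact (a * b) f = lact a (lact b f)) /\
      (forall f, lact 1 f = f)) /\
  (
      (forall a b f, ract f (a + b) = ract f a + ract f b) /\
      (forall a f g, ract (f + g) a = ract f a + ract g a) /\
      (forall (c : C) a f, ract f (c *: a) = c *: ract f a) /\
      (forall (c : C) a f, ract (c *: f) a = c *: ract f a) /\
      (forall a b f, ract f (a * b) = ract (ract f a) b) /\
      (forall f, ract f 1 = f)) /\
  (
      (forall a b f, ract (lact a f) b = lact a (ract f b)) /\
      (forall a f g, lact a (mulF f g) = mulF (lact a f) g) /\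
      (forall a f g, ract (mulF f g) a = mulF f (ract g a)) /\
      (forall a f g, mulF (ract f a) g = mulF f (lact a g))).

(* q^k in F, k >= 1 : qpow q k = q^(k.+1) *)
Fixpoint qpow (q : F) (k : nat) : F :=
  if k is k'.+1 then mulF (qpow q k') q else q.

(* qword q a k = a_0 q a_1 q ... a_k q   (k.+1 copies of q) *)
Fixpoint qword (q : F) (a : nat -> A) (k : nat) : F :=
  if k is k'.+1 then mulF (ract (qword q a k') (a k)) q else lact (a 0%N) q.

(* Cyclic-antimonotone independence of (A, {q}):
   Phi(a_0 q a_1 ... a_{n-1} q a_n) = phi(a_0 a_n) prod_{i=1}^{n-1} phi(a_i) Phi(q^n)
   for all n >= 1 (here n = m.+1) and all a_0, ..., a_n in A. *)
Definition cyclic_antimonotone_indep (q : F) : Prop :=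
  forall (m : nat) (a : nat -> A),
    Phi (ract (qword q a m) (a m.+1)) =
      phi (a 0%N * a m.+1) * (\prod_(1 <= i < m.+1) phi (a i)) * Phi (qpow q m).

(* The algebra B = A (+) F *)
Definition mulB (x y : A * F) : A * F :=
  (x.1 * y.1, lact x.1 y.2 + ract x.2 y.1 + mulF x.2 y.2).
Definition oneB : A * F := (1, 0).
Definition phiB (x : A * F) : C := phi x.1.
Definition phiB' (x : A * F) : C := Phi x.2.

End TypeBprime.

Definition noncrossing n (P : {set {set 'I_n}}) : bool :=
  [forall B1 in P, forall B2 in P, (B1 != B2) ==>
     ~~ [exists a : 'I_n, exists b : 'I_n, exists c : 'I_n, exists d : 'I_n,
          [&& (a < b)%N, (b < c)%N, (c < d)%N, a \in B1, c \in B1, b \in B2 & d \in B2]]].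

Definition is_ncpart n (P : {set {set 'I_n}}) : bool :=
  partition P [set: 'I_n] && noncrossing P.

Definition NC n := {P : {set {set 'I_n}} | is_ncpart P}.

Definition ncle n (pi sigma : NC n) : bool :=
  [forall V in val pi, exists W in val sigma, V \subset W].

(* Moebius function of NC(n), via the standard recursion
   mu(s,s) = 1, mu(s,t) = - sum_{s <= r < t} mu(s,r) if s < t, 0 otherwise;
   the fuel #|NC n|.+1 exceeds the length of every chain. *)
Fixpoint mu_fuel n (k : nat) (s t : NC n) : int :=
  if k is k'.+1 then
    if s == t then 1
    else if ncle s t then
      - \sum_(r : NC n | [&& ncle s r, ncle r t & r != t]) mu_fuel k' s r
    else 0
  else 0.
Definition mobius_nc n (s t : NC n) : int := mu_fuel #|{: NC n}|.+1 s t.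

(* ---------- the ring G = C[eps]/(eps^2), as pairs (x, y) = x + eps y ---------- *)
Section Infinitesimal.
Variables (R : realType).
Local Notation C := (R[i]).
Definition gmul (x y : C * C) : C * C := (x.1 * y.1, x.1 * y.2 + x.2 * y.1).
Definition gadd (x y : C * C) : C * C := (x.1 + y.1, x.2 + y.2).
Definition gscale (z : int) (x : C * C) : C * C := (z%:~R * x.1, z%:~R * x.2).

Variables (A : algType C) (F : lmodType C)
          (mulF : F -> F -> F) (lact : A -> F -> F) (ract : F -> A -> F)
          (phi : A -> C) (Phi : F -> C).

(* tilde phi = phi + eps phi' : B -> G *)
Definition phitilde (x : A * F) : C * C :=
  (phiB phi x, phiB' Phi x).

Definition phitilde_part n (pi : NC n) (b : 'I_n -> A * F) : C * C :=
  \big[gmul/(1, 0)]_(V in val pi)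
     phitilde (\big[@mulB R A F mulF lact ract/@oneB R A F]_(i in V) b i).

Definition kappatilde n (pi : NC n) (b : 'I_n -> A * F) : C * C :=
  \big[gadd/(0, 0)]_(s : NC n | ncle s pi) gscale (mobius_nc s pi) (phitilde_part s b).

Definition kappa' n (pi : NC n) (b : 'I_n -> A * F) : C := (kappatilde pi b).2.
End Infinitesimal.

(* Main.v *)
Require Import Defs.
From mathcomp Require Import all_boot all_order all_algebra complex.
From mathcomp Require Import reals.
Set Implicit Arguments. Unset Strict Implicit. Unset Printing Implicit Defensive.
Import Order.TTheory GRing.Theory Num.Theory.
Local Open Scope ring_scope.

Lemma ncle_refl n (s : NC n) : ncle s s.
Proof. by apply/forall_inP => V HV; apply/exists_inP; exists V. Qed.

Lemma ncle_trans n (s t u : NC n) : ncle s t -> ncle t u -> ncle s u.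
Proof.
move=> /forall_inP H1 /forall_inP H2; apply/forall_inP => V HV.
have /exists_inP [W HW sVW] := H1 V HV.
have /exists_inP [X HX sWX] := H2 W HW.
by apply/exists_inP; exists X => //; apply: subset_trans sVW sWX.
Qed.

Lemma nc_blocks n (s : NC n) V : V \in val s -> V != set0.
Proof.
case: s => P /= /andP [/and3P [_ _ H0] _] HV.
by apply/eqP => E; rewrite -E HV in H0.
Qed.

Lemma nc_triv n (s : NC n) V W : V \in val s -> W \in val s -> V != set0 -> V \subset W -> V = W.
Proof.
case: s => P /= /andP [/and3P [_ /trivIsetP Ht _] _] HV HW /set0Pn [x Hx] sVW.
apply/eqP; apply: contraT => ne.
have := Ht V W HV HW ne; rewrite -setI_eq0 => /eqP E.
have : x \in V :&: W by rewrite inE Hx (subsetP sVW).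
by rewrite E inE.
Qed.

Lemma ncle_sub n (s t : NC n) : ncle s t -> ncle t s -> val s \subset val t.
Proof.
move=> /forall_inP H1 /forall_inP H2; apply/subsetP => V HV.
have /exists_inP [W HW sVW] := H1 V HV.
have /exists_inP [X HX sWX] := H2 W HW.
have E : V = X by apply: nc_triv HV HX (nc_blocks HV) (subset_trans sVW sWX).
suff -> : V = W by [].
by apply/eqP; rewrite eqEsubset sVW; rewrite E.
Qed.

Lemma ncle_anti n (s t : NC n) : ncle s t -> ncle t s -> s = t.
Proof.
move=> H1 H2; apply: val_inj; apply/eqP; rewrite eqEsubset.
by rewrite !ncle_sub.
Qed.

Definition itv n (s t : NC n) := [set r : NC n | ncle s r && ncle r t].

Lemma mu_stable n k (s t : NC n) : (#|itv s t| <= k)%N -> mu_fuel k.+1 s t = mu_fuel k s t.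
Proof.
elim: k s t => [|k IH] s t Hc.
  have nst : ~~ ncle s t.
    apply: contraTN Hc => H; rewrite -ltnNge card_gt0; apply/set0Pn; exists s.
    by rewrite inE ncle_refl.
  rewrite /=; case: eqP => [E|_]; last by rewrite (negbTE nst).
  by rewrite E ncle_refl in nst.
rewrite [LHS]/= [RHS]/=; case: eqP => // _; case: ifP => // Hst.
congr (- _); apply: eq_bigr => r /and3P [Hsr Hrt Hne]; apply: IH.
rewrite -ltnS; apply: leq_trans Hc; apply: proper_card.
rewrite properE; apply/andP; split.
  apply/subsetP => x; rewrite !inE => /andP [-> Hx] /=; exact: ncle_trans Hx Hrt.
apply/subsetPn; exists t; first by rewrite inE Hst ncle_refl.
rewrite inE negb_and; apply/orP; right; apply: contra Hne => Htr.
by apply/eqP; apply: ncle_anti.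
Qed.

Lemma mobius_sum n (s t : NC n) :
  \sum_(r : NC n | ncle s r && ncle r t) mobius_nc s r = (s == t)%:R.
Proof.
case: (boolP (ncle s t)) => Hst; last first.
  rewrite big_pred0; last first.
    move=> r; apply/negbTE; apply: contra Hst => /andP [H1 H2]; exact: ncle_trans H1 H2.
  case: eqP => // E; by rewrite E ncle_refl in Hst.
rewrite (bigD1 t) /=; last by rewrite Hst ncle_refl.
case: eqP => [E|ne].
  subst t; rewrite big_pred0 /mobius_nc /= ?eqxx ?addr0 //.
  move=> r; apply/negbTE/negP => /andP [/andP [H1 H2] H3].
  by rewrite (ncle_anti H1 H2) eqxx in H3.
rewrite /mobius_nc [mu_fuel _ s t]/=.
move/eqP/negbTE: ne => ->; rewrite Hst.
rewrite (eq_bigl (fun r => [&& ncle s r, ncle r t & r != t])); last first.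
  by move=> r; rewrite andbA.
rewrite -[X in - X + _]/(\sum_(r | _) mu_fuel _ _ _).
rewrite addrC; apply/eqP; rewrite subr_eq0; apply/eqP.
apply: eq_big => [r|r _]; first by rewrite andbA.
apply: mu_stable; exact: max_card.
Qed.
Lemma gprod_const (R : realType) (k : nat) :
  iter k (@gmul R (1, -1)) (1, 0) = (1, - k%:R).
Proof.
elim: k => [|k IH] /=; first by rewrite oppr0.
by rewrite IH /gmul /= !mulr1 !mul1r mulrS opprD addrC.
Qed.

Theorem lemmaA1 (R : realType) (A : algType R[i]) (F : lmodType R[i])
    (mulF : F -> F -> F) (lact : A -> F -> F) (ract : F -> A -> F)
    (phi : A -> R[i]) (Phi : F -> R[i])
    (HB : is_ncps_typeBprime mulF lact ract phi Phi)
    (q : F) (hq2 : mulF q q = q) (hq1 : Phi q = 1)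
    (hind : cyclic_antimonotone_indep mulF lact ract phi Phi q) :
  let p : A * F := (1, - q) (* p = 1_B - q *) in
  forall (n : nat), (0 < n)%N ->
  forall (sigma : NC n),
    \sum_(pi : NC n | ncle pi sigma)
        kappa' mulF lact ract phi Phi pi (fun _ => p)
      = - (#|val sigma|)%:R.
Proof.
move=> p n _ sigma.
move: HB; rewrite /is_ncps_typeBprime => [[[_ [_ phi1]] [[_ PhiZ] [[_ [_ [mulFD [mulFZl mulFZr]]]] [[_ [_ [_ [_ [_ lact1]]]]] [[_ [_ [_ [_ [_ ract1]]]]] _]]]]]].
have mulF0 : forall f, mulF f 0 = 0.
  by move=> f; apply: (addrI (mulF f 0)); rewrite addr0 -mulFD addr0.
have pp : mulB mulF lact ract p p = p.
  rewrite /mulB /p /= mulr1 lact1 ract1.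
  have -> : mulF (- q) (- q) = q.
    by rewrite -scaleN1r mulFZl mulFZr hq2 scalerA mulrN1 opprK scale1r.
  by rewrite addrNK.
have p1 : mulB mulF lact ract p (@oneB _ A F) = p.
  by rewrite /mulB /p /oneB /= mulr1 lact1 ract1 mulF0 add0r addr0.
have pk : forall k, (0 < k)%N -> iter k (mulB mulF lact ract p) (@oneB _ A F) = p.
  elim=> [|k IH] // _; case: k IH => [|k] IH /=; first by rewrite p1.
  by rewrite -/(iter k.+1 _ _) IH.
have Phiq : Phi (- q) = -1.
  by rewrite -scaleN1r PhiZ hq1 mulr1.
have Hpart : forall s : NC n, phitilde_part mulF lact ract phi Phi s (fun _ => p)
    = (1, - (#|val s|)%:R).
  move=> s; rewrite /phitilde_part.
  rewrite (eq_bigr (fun _ => (1, -1))); first by rewrite big_const gprod_const.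
  move=> V HV; rewrite big_const pk; last by rewrite card_gt0 (nc_blocks HV).
  by rewrite /phitilde /phiB /phiB' /= phi1 Phiq.
have Hk : forall pi : NC n, kappa' mulF lact ract phi Phi pi (fun _ => p)
   = \sum_(s : NC n | ncle s pi) (mobius_nc s pi)%:~R * - (#|val s|)%:R.
  move=> pi; rewrite /kappa' /kappatilde.
  rewrite (big_morph snd (id1 := 0) (op1 := +%R)) //.
  by apply: eq_bigr => s _; rewrite Hpart.
under eq_bigr => pi _ do rewrite Hk.
rewrite (exchange_big_dep (fun s => ncle s sigma)) /=; last first.
  move=> pi s H1 H2; exact: ncle_trans H2 H1.
under eq_bigr => s _.
  rewrite -mulr_suml.
  rewrite (eq_bigl (fun pi => ncle s pi && ncle pi sigma)); last by move=> pi; rewrite andbC.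
  rewrite -(big_morph (fun z : int => z%:~R : R[i]) (@intrD _) (mulr0z 1)) mobius_sum.
  over.
rewrite (bigD1 sigma) ?ncle_refl //= eqxx mul1r big1 ?addr0 //.
by move=> s /andP [_ /negbTE ->]; rewrite mul0r.
Qed.
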